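(* Let $m_1,m_2\in\mathbb{N}$ be relatively prime, let $\alpha\in\mathbb{R}$, and let $\boldsymbol{\varrho}=\boldsymbol{\varrho}^{(\boldsymbol{m})}_\alpha$ be the rhodonea curve defined below. For $t\in[0,2\pi)$ put $\mathcal{S}(t)=\{s\in[0,2\pi):\ \boldsymbol{\varrho}(s)=\boldsymbol{\varrho}(t)\}$, and let $t_l=\frac{l\pi}{2m_1m_2}$ for $l\in\{0,1,\dots,4m_1m_2-1\}$. If $m_1+m_2$ is odd, then the minimal period of $\boldsymbol{\varrho}$ is $2\pi$ and: (i) $\#\mathcal{S}(t)=2m_2$ if $t=t_l$ for some $l\in\{0,\dots,4m_1m_2-1\}$ with $l\equiv m_1 \pmod{2m_1}$; (ii) $\#\mathcal{S}(t)=2$ if $t=t_l$ for some $l\in\{0,\dots,4m_1m_2-1\}$ with $l\not\equiv 0\pmod{m_1}$; (iii) $\#\mathcal{S}(t)=1$ for all other $t\in[0,2\pi)$. If $m_1+m_2$ is even, then the minimal period of $\boldsymbol{\varrho}$ is $\pi$ and: (i)' $\#\mathcal{S}(t)=2m_2$ if $t=t_l$ for some $l\in\{0,\dots,4m_1m_2-1\}$ with $l\equiv m_1\pmod{2m_1}$; (ii)' $\#\mathcal{S}(t)=4$ if $t=t_{2l}$ for some $l\in\{0,\dots,2m_1m_2-1\}$ with $l\not\equiv 0\pmod{m_1}$; (iii)' $\#\mathcal{S}(t)=2$ for all other $t\in[0,2\pi)$.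
   Context: For $\boldsymbol{m}=(m_1,m_2)\in\mathbb{N}^2$ and $\alpha\in\mathbb{R}$, the rhodonea curve is $\boldsymbol{\varrho}^{(\boldsymbol{m})}_\alpha:\mathbb{R}\to\mathbb{R}^2$, $\boldsymbol{\varrho}^{(\boldsymbol{m})}_\alpha(t)=\big(\cos(m_2t)\cos(m_1t-\alpha\pi),\ \cos(m_2t)\sin(m_1t-\alpha\pi)\big)$. It takes values in the closed unit disk $\mathbb{D}=\{x\in\mathbb{R}^2:|x|\le1\}$. *)

(* Defs.v *)
From Stdlib Require Import Reals Lra Lia Arith List.
Import ListNotations.
Open Scope R_scope.

Definition rhodonea (m1 m2 : nat) (alpha : R) (t : R) : R * R :=
  (cos (INR m2 * t) * cos (INR m1 * t - alpha * PI),
   cos (INR m2 * t) * sin (INR m1 * t - alpha * PI)).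

Definition is_period (f : R -> R * R) (p : R) : Prop :=
  forall t : R, f (t + p) = f t.

Definition minimal_period (f : R -> R * R) (T : R) : Prop :=
  0 < T /\ is_period f T /\ (forall p : R, 0 < p -> is_period f p -> T <= p).

Definition S_set (f : R -> R * R) (t : R) (s : R) : Prop :=
  0 <= s < 2 * PI /\ f s = f t.

Definition card_eq (A : R -> Prop) (n : nat) : Prop :=
  exists l : list R, NoDup l /\ length l = n /\ (forall s, In s l <-> A s).

Definition t_node (m1 m2 l : nat) : R :=
  INR l * PI / (2 * INR m1 * INR m2).

(* Main.v *)
Require Import Defs.
From Stdlib Require Import Reals Lra Lia Arith List ZArith Znumtheory FinFun.
Import ListNotations.
Open Scope R_scope.

Lemma cos_2piZ x j : cos (x + IZR j * (2*PI)) = cos x.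
Proof.
  destruct j as [|p|p]; simpl.
  - f_equal; ring.
  - rewrite <- positive_nat_Z, <- INR_IZR_INZ.
    replace (x + INR (Pos.to_nat p) * (2 * PI)) with (x + 2 * INR (Pos.to_nat p) * PI) by ring.
    apply cos_period.
  - rewrite <- Pos2Z.opp_pos, opp_IZR, <- positive_nat_Z, <- INR_IZR_INZ.
    set (n := Pos.to_nat p).
    rewrite <- (cos_period (x + - INR n * (2*PI)) n). f_equal; ring.
Qed.

Lemma sin_ZPI k : sin (IZR k * PI) = 0.
Proof. apply sin_eq_0_1; eauto. Qed.

Lemma cos_ZPI_sq k : cos (IZR k * PI) * cos (IZR k * PI) = 1.
Proof. pose proof (sin2_cos2 (IZR k * PI)). rewrite sin_ZPI in H. unfold Rsqr in H. lra. Qed.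

Lemma cos_eq_inv x y : cos x = cos y ->
  exists j : Z, x = y + IZR j * (2*PI) \/ x = - y + IZR j * (2*PI).
Proof.
  intro H. assert (E : cos x - cos y = 0) by lra.
  rewrite form2 in E.
  assert (sin ((x - y)/2) = 0 \/ sin ((x+y)/2) = 0) as [E1|E1].
  { destruct (Req_dec (sin ((x - y)/2)) 0); [left; auto| right].
    apply Rmult_integral in E. destruct E as [E|E]; [|auto].
    apply Rmult_integral in E. destruct E; [lra|contradiction]. }
  - destruct (sin_eq_0_0 _ E1) as [j Hj]. exists j. left. lra.
  - destruct (sin_eq_0_0 _ E1) as [j Hj]. exists j. right. lra.
Qed.

Definition D1 (m1 m2 : nat) (s t : R) : Prop :=
  exists c : Z, s = t + IZR c * PI /\ Z.Even (c * (Z.of_nat m1 + Z.of_nat m2)).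

Definition tz (m1 m2 : nat) (L : Z) : R := IZR L * PI / (2 * INR m1 * INR m2).

Definition D2 (m1 m2 : nat) (s t : R) : Prop :=
  exists q k : Z, Z.Even (q + k) /\
    t = tz m1 m2 (Z.of_nat m1 * q + Z.of_nat m2 * k) /\
    s = tz m1 m2 (Z.of_nat m1 * q - Z.of_nat m2 * k).

Lemma posINR m : (1 <= m)%nat -> 0 < INR m.
Proof. intro; apply lt_0_INR; lia. Qed.

Lemma IZR_PI_inj a b : IZR a * PI = IZR b * PI -> a = b.
Proof. intro H. apply eq_IZR. pose proof PI_RGT_0. nra. Qed.

Lemma rho_bwd_gen m1 m2 alpha s t k :
  INR m1 * (t - s) = IZR k * PI ->
  cos (INR m2 * s) = cos (INR m2 * t + IZR k * PI) ->
  rhodonea m1 m2 alpha s = rhodonea m1 m2 alpha t.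
Proof.
  intros H1 H2. unfold rhodonea.
  assert (Es : INR m1 * s - alpha * PI = (INR m1 * t - alpha * PI) - IZR k * PI) by lra.
  assert (Ec : cos (INR m1 * s - alpha * PI) = cos (INR m1 * t - alpha * PI) * cos (IZR k * PI)).
  { rewrite Es, cos_minus, sin_ZPI. ring. }
  assert (Es2 : sin (INR m1 * s - alpha * PI) = sin (INR m1 * t - alpha * PI) * cos (IZR k * PI)).
  { rewrite Es, sin_minus, sin_ZPI. ring. }
  rewrite Ec, Es2, H2, cos_plus, sin_ZPI.
  pose proof (cos_ZPI_sq k) as Hc.
  set (c := cos (IZR k * PI)) in *.
  f_equal; ring_simplify; replace (c^2) with 1 by (rewrite <- Hc; ring); ring.
Qed.

Lemma rho_D1 m1 m2 alpha s t : D1 m1 m2 s t -> rhodonea m1 m2 alpha s = rhodonea m1 m2 alpha t.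
Proof.
  intros [c [Hs [w Hw]]].
  apply (rho_bwd_gen _ _ _ _ _ (- Z.of_nat m1 * c)%Z).
  - rewrite mult_IZR, opp_IZR, <- INR_IZR_INZ. rewrite Hs. ring.
  - rewrite Hs. replace (INR m2 * (t + IZR c * PI)) with
      (INR m2 * t + IZR (- Z.of_nat m1 * c)%Z * PI + IZR w * (2*PI)).
    + apply cos_2piZ.
    + assert (IZR (c * (Z.of_nat m1 + Z.of_nat m2)) = IZR (2 * w)) by (f_equal; lia).
      rewrite !mult_IZR, plus_IZR, <- !INR_IZR_INZ in *. rewrite opp_IZR.
      apply (f_equal (fun z => z * PI)) in H. rewrite <- INR_IZR_INZ. lra.
Qed.

Lemma tz_eq m1 m2 L : (1 <= m1)%nat -> (1 <= m2)%nat ->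
  2 * INR m1 * INR m2 * tz m1 m2 L = IZR L * PI.
Proof. intros h1 h2. pose proof (posINR _ h1). pose proof (posINR _ h2). unfold tz. field. lra. Qed.

Lemma rho_D2 m1 m2 alpha s t : (1 <= m1)%nat -> (1 <= m2)%nat ->
  D2 m1 m2 s t -> rhodonea m1 m2 alpha s = rhodonea m1 m2 alpha t.
Proof.
  intros h1 h2 [q [k [[w Hw] [Ht Hs]]]].
  pose proof (posINR _ h1). pose proof (posINR _ h2).
  pose proof (tz_eq _ _ (Z.of_nat m1 * q + Z.of_nat m2 * k)%Z h1 h2) as E1.
  pose proof (tz_eq _ _ (Z.of_nat m1 * q - Z.of_nat m2 * k)%Z h1 h2) as E2.
  rewrite <- Ht in E1. rewrite <- Hs in E2.
  rewrite plus_IZR, minus_IZR, !mult_IZR, <- !INR_IZR_INZ in *.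
  apply (rho_bwd_gen _ _ _ _ _ k).
  - apply (Rmult_eq_reg_l (2 * INR m2)); [|nra]. nra.
  - replace (INR m2 * s) with (- (INR m2 * t + IZR k * PI) + IZR w * (2*PI)).
    + rewrite cos_2piZ, cos_neg. auto.
    + assert (IZR (q + k) = IZR (2*w)) by (f_equal; lia).
      rewrite plus_IZR, mult_IZR in H1.
      apply (Rmult_eq_reg_l (2 * INR m1)); [|nra]. nra.
Qed.

Lemma tz_of m1 m2 x L : (1 <= m1)%nat -> (1 <= m2)%nat ->
  2 * INR m1 * INR m2 * x = IZR L * PI -> x = tz m1 m2 L.
Proof. intros h1 h2 H. pose proof (posINR _ h1). pose proof (posINR _ h2).
  unfold tz. rewrite <- H. field. lra. Qed.

Lemma rho_fwd m1 m2 alpha s t : (1 <= m1)%nat -> (1 <= m2)%nat ->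
  Z.gcd (Z.of_nat m1) (Z.of_nat m2) = 1%Z ->
  rhodonea m1 m2 alpha s = rhodonea m1 m2 alpha t -> cos (INR m2 * t) <> 0 ->
  D1 m1 m2 s t \/ D2 m1 m2 s t.
Proof.
  intros h1 h2 hg H Hb. unfold rhodonea in H. injection H as Ha1 Ha2.
  pose proof (posINR _ h1). pose proof (posINR _ h2). pose proof PI_RGT_0.
  set (a := cos (INR m2 * s)) in *. set (b := cos (INR m2 * t)) in *.
  set (ts := INR m1 * s - alpha * PI) in *. set (tt := INR m1 * t - alpha * PI) in *.
  pose proof (sin2_cos2 ts) as Ps. pose proof (sin2_cos2 tt) as Pt. unfold Rsqr in *.
  assert (Hab : a * a = b * b).
  { transitivity ((a * cos ts)*(a * cos ts) + (a * sin ts) * (a * sin ts)).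
    - transitivity (a*a*(sin ts * sin ts + cos ts * cos ts)); [rewrite Ps| ]; ring.
    - rewrite Ha1, Ha2. transitivity (b*b*(sin tt * sin tt + cos tt * cos tt)); [ring| rewrite Pt; ring]. }
  assert (Ha : a <> 0). { intro E. apply Hb. rewrite E in Hab. nra. }
  assert (Hd : sin (tt - ts) = 0).
  { rewrite sin_minus. apply (Rmult_eq_reg_l (a * b)); [|intro E; apply Rmult_integral in E; tauto].
    transitivity ((b * sin tt) * (a * cos ts) - (b * cos tt) * (a * sin ts)); [ring|].
    rewrite <- Ha1, <- Ha2. ring. }
  destruct (sin_eq_0_0 _ Hd) as [k Hk].
  assert (Hk1 : INR m1 * (t - s) = IZR k * PI) by (unfold tt, ts in Hk; lra).
  pose proof (cos_ZPI_sq k) as Hc.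
  assert (Ec : cos ts = cos tt * cos (IZR k * PI)).
  { replace ts with (tt - IZR k * PI) by lra. rewrite cos_minus, sin_ZPI. ring. }
  assert (Es : sin ts = sin tt * cos (IZR k * PI)).
  { replace ts with (tt - IZR k * PI) by lra. rewrite sin_minus, sin_ZPI. ring. }
  set (c := cos (IZR k * PI)) in *.
  assert (Hac : a * c = b).
  { transitivity ((a * cos ts) * cos tt + (a * sin ts) * sin tt).
    - rewrite Ec, Es. transitivity (a * c * (sin tt * sin tt + cos tt * cos tt)); [rewrite Pt|]; ring.
    - rewrite Ha1, Ha2. transitivity (b * (sin tt * sin tt + cos tt * cos tt)); [ring|rewrite Pt; ring]. }
  assert (Hcs : a = cos (INR m2 * t + IZR k * PI)).
  { rewrite cos_plus, sin_ZPI. fold b. fold c. rewrite <- Hac.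
    transitivity (a * (c * c)); [rewrite Hc|]; ring. }
  destruct (cos_eq_inv _ _ Hcs) as [j [Hj|Hj]].
  - left.
    assert (Z1 : (Z.of_nat m2 * k + Z.of_nat m1 * (k + 2 * j) = 0)%Z).
    { apply IZR_PI_inj. rewrite plus_IZR, !mult_IZR, plus_IZR, mult_IZR, <- !INR_IZR_INZ.
      apply (f_equal (fun z => INR m2 * z)) in Hk1. nra. }
    assert (Dv : (Z.of_nat m1 | k)%Z).
    { apply Z.gauss with (Z.of_nat m2); auto. exists (- (k + 2 * j))%Z. lia. }
    destruct Dv as [z Hz]. exists (- z)%Z. split.
    + subst k. rewrite mult_IZR, <- INR_IZR_INZ in Hk1.
      apply (Rmult_eq_reg_l (INR m1)); [|lra]. rewrite opp_IZR. nra.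
    + exists j. subst k.
      assert (EE : (Z.of_nat m1 * (z * (Z.of_nat m1 + Z.of_nat m2) + 2 * j) = 0)%Z) by lia.
      apply Z.eq_mul_0 in EE. lia.
  - right. exists (2 * j - k)%Z, k. split; [exists j; lia|]. split.
    + apply tz_of; auto. rewrite plus_IZR, !mult_IZR, minus_IZR, mult_IZR, <- !INR_IZR_INZ.
      nra.
    + apply tz_of; auto. rewrite minus_IZR, !mult_IZR, minus_IZR, mult_IZR, <- !INR_IZR_INZ.
      nra.
Qed.

Section S.
Variables (m1 m2 : nat) (h1 : (1 <= m1)%nat) (h2 : (1 <= m2)%nat).

Let P1' := posINR _ h1.
Let P2' := posINR _ h2.

Lemma tz_inj a b : tz m1 m2 a = tz m1 m2 b -> a = b.
Proof.
  intro H. apply IZR_PI_inj. rewrite <- (tz_eq m1 m2 a), <- (tz_eq m1 m2 b); auto. rewrite H; auto.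
Qed.

Lemma tz_shift L n : tz m1 m2 (L + 2 * Z.of_nat m1 * Z.of_nat m2 * n) = tz m1 m2 L + IZR n * PI.
Proof.
  unfold tz. rewrite plus_IZR, !mult_IZR, <- !INR_IZR_INZ. field. lra.
Qed.

Lemma tz_range L : 0 <= tz m1 m2 L < 2 * PI <-> (0 <= L < 4 * Z.of_nat m1 * Z.of_nat m2)%Z.
Proof.
  pose proof PI_RGT_0. pose proof (tz_eq m1 m2 L h1 h2) as E.
  set (x := tz m1 m2 L) in *.
  assert (Hm : 0 < 2 * INR m1 * INR m2) by nra.
  split.
  - intros [A B]. split.
    + apply le_IZR. apply (Rmult_le_reg_r PI); auto. rewrite <- E. nra.
    + apply lt_IZR. apply (Rmult_lt_reg_r PI); auto. rewrite <- E.
      rewrite !mult_IZR, <- !INR_IZR_INZ. nra.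
  - intros [A B]. apply IZR_le in A. apply IZR_lt in B.
    rewrite !mult_IZR, <- !INR_IZR_INZ in B. split.
    + apply (Rmult_le_reg_l (2 * INR m1 * INR m2)); auto. rewrite E. nra.
    + apply (Rmult_lt_reg_l (2 * INR m1 * INR m2)); auto. rewrite E. nra.
Qed.

Lemma t_node_tz l : t_node m1 m2 l = tz m1 m2 (Z.of_nat l).
Proof. unfold t_node, tz. rewrite <- INR_IZR_INZ. auto. Qed.

Lemma zero_iff x : cos (INR m2 * x) = 0 <-> exists j, x = tz m1 m2 (Z.of_nat m1 * (2 * j + 1)).
Proof.
  pose proof PI_RGT_0. split.
  - intro HH. destruct (cos_eq_0_0 _ HH) as [j Hj]. exists j. apply tz_of; auto.
    rewrite mult_IZR, plus_IZR, mult_IZR, <- INR_IZR_INZ.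
    apply (f_equal (fun z => 2 * INR m1 * z)) in Hj. nra.
  - intros [j Hj]. apply cos_eq_0_1. exists j.
    pose proof (tz_eq m1 m2 (Z.of_nat m1 * (2 * j + 1))%Z h1 h2) as E. rewrite <- Hj in E.
    rewrite mult_IZR, plus_IZR, mult_IZR, <- INR_IZR_INZ in E.
    apply (Rmult_eq_reg_l (2 * INR m1)); [|lra]. nra.
Qed.

End S.

Lemma rho_zero m1 m2 alpha s t : cos (INR m2 * t) = 0 ->
  (rhodonea m1 m2 alpha s = rhodonea m1 m2 alpha t <-> cos (INR m2 * s) = 0).
Proof.
  intro H. unfold rhodonea. rewrite H, !Rmult_0_l. split.
  - intro E. injection E as E1 E2.
    pose proof (sin2_cos2 (INR m1 * s - alpha * PI)). unfold Rsqr in *.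
    apply Rmult_integral in E1. apply Rmult_integral in E2.
    destruct E1; auto. destruct E2; auto. rewrite H1, H2 in H0. lra.
  - intro E. rewrite E, !Rmult_0_l. auto.
Qed.

Lemma pi_class x y n : 0 <= x < 2 * PI -> 0 <= y < 2 * PI -> y = x + IZR n * PI ->
  (-1 <= n <= 1)%Z.
Proof.
  intros A B E. pose proof PI_RGT_0.
  assert (-2 < IZR n < 2).
  { split; apply (Rmult_lt_reg_r PI); auto; nra. }
  destruct H0. apply lt_IZR in H0. apply lt_IZR in H1. lia.
Qed.

Definition oth (x : R) : R := if Rlt_dec x PI then x + PI else x - PI.

Lemma oth_spec x : 0 <= x < 2 * PI ->
  0 <= oth x < 2 * PI /\ oth x <> x /\ exists e, (e = 1%Z \/ e = (-1)%Z) /\ oth x = x + IZR e * PI.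
Proof.
  intro. pose proof PI_RGT_0. unfold oth. destruct (Rlt_dec x PI).
  - split; [lra|]. split; [lra|]. exists 1%Z. split; auto. simpl. ring.
  - split; [lra|]. split; [lra|]. exists (-1)%Z. split; auto. simpl. ring.
Qed.

Lemma pi_class2 x y n : 0 <= x < 2 * PI -> 0 <= y < 2 * PI -> y = x + IZR n * PI ->
  y = x \/ y = oth x.
Proof.
  intros A B E. pose proof PI_RGT_0. pose proof (pi_class _ _ _ A B E).
  assert (n = (-1)%Z \/ n = 0%Z \/ n = 1%Z) as [ -> | [ -> | -> ] ] by lia; simpl in E.
  - right. unfold oth. destruct (Rlt_dec x PI); lra.
  - left. lra.
  - right. unfold oth. destruct (Rlt_dec x PI); lra.
Qed.

Lemma pi_class_even x y n : 0 <= x < 2 * PI -> 0 <= y < 2 * PI -> y = x + IZR n * PI ->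
  Z.Even n -> y = x.
Proof.
  intros A B E [w Hw]. pose proof (pi_class _ _ _ A B E).
  assert (w = 0%Z) by lia. subst. simpl in *. lra.
Qed.

Section S.
Variables (m1 m2 : nat) (h1 : (1 <= m1)%nat) (h2 : (1 <= m2)%nat)
  (hg : Z.gcd (Z.of_nat m1) (Z.of_nat m2) = 1%Z).

Lemma D2_uniq s1 s2 t : D2 m1 m2 s1 t -> D2 m1 m2 s2 t ->
  exists n, s1 = s2 + IZR n * PI /\ Z.Even (n * (Z.of_nat m2 - Z.of_nat m1)).
Proof.
  intros [q1 [k1 [[a Ha] [Ht1 Hs1]]]] [q2 [k2 [[b Hb] [Ht2 Hs2]]]].
  rewrite Ht1 in Ht2. apply (tz_inj m1 m2 h1 h2) in Ht2.
  assert (Dv : (Z.of_nat m2 | q1 - q2)%Z).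
  { apply Z.gauss with (Z.of_nat m1). exists (k2 - k1)%Z. lia. rewrite Z.gcd_comm; auto. }
  destruct Dv as [n Hn].
  assert (Hk : (k2 - k1 = n * Z.of_nat m1)%Z).
  { apply (Z.mul_reg_l _ _ (Z.of_nat m2)); [lia|]. nia. }
  exists n. split.
  - rewrite Hs1, Hs2, <- (tz_shift m1 m2 h1 h2). f_equal. nia.
  - exists (a - b)%Z. nia.
Qed.

Lemma D2_shift s t n : D2 m1 m2 s t -> Z.Even (n * (Z.of_nat m2 - Z.of_nat m1)) ->
  D2 m1 m2 (s + IZR n * PI) t.
Proof.
  intros [q [k [[a Ha] [Ht Hs]]]] [b Hb].
  exists (q + Z.of_nat m2 * n)%Z, (k - Z.of_nat m1 * n)%Z. split.
  { exists (a + b)%Z. replace (q + Z.of_nat m2 * n + (k - Z.of_nat m1 * n))%Z with ((q + k) + n * (Z.of_nat m2 - Z.of_nat m1))%Z by ring. rewrite Ha, Hb. ring. } split.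
  - rewrite Ht. f_equal. ring.
  - rewrite Hs, <- (tz_shift m1 m2 h1 h2). f_equal. ring.
Qed.

Lemma bezout_L L : exists q k, (Z.of_nat m1 * q + Z.of_nat m2 * k = L)%Z.
Proof.
  destruct (Z.gcd_bezout _ _ _ hg) as [u [v Huv]].
  exists (u * L)%Z, (v * L)%Z. transitivity ((u * Z.of_nat m1 + v * Z.of_nat m2) * L)%Z; [ring|]. rewrite Huv. ring.
Qed.

Lemma D1_iff_gen s t : D1 m1 m2 s t <-> exists c, s = t + IZR c * PI /\ Z.Even (c * (Z.of_nat m1 + Z.of_nat m2)).
Proof. reflexivity. Qed.

End S.

Lemma even_mul_odd a b : Z.Even (a * b) -> Z.Odd b -> Z.Even a.
Proof.
  intros H1 H2. rewrite <- Z.even_spec in *. rewrite <- Z.odd_spec in H2.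
  rewrite Z.even_mul in H1. rewrite <- (Z.negb_odd b) in H1. rewrite H2 in H1. simpl in H1.
  destruct (Z.even a); auto.
Qed.

Lemma card_list (A : R -> Prop) (l : list R) : NoDup l -> (forall s, In s l <-> A s) -> card_eq A (length l).
Proof. intros; exists l; auto. Qed.

Lemma shift_into Y P : (0 < P)%Z -> exists n, (0 <= Y + P * n < P)%Z.
Proof.
  intro HP. exists (- (Y / P))%Z. pose proof (Z.div_mod Y P ltac:(lia)).
  pose proof (Z.mod_pos_bound Y P HP). nia.
Qed.

Lemma nat_mod_div (l m : nat) : (1 <= m)%nat -> ((l mod m = 0)%nat <-> (Z.of_nat m | Z.of_nat l)%Z).
Proof.
  intro h. rewrite <- Z.mod_divide by lia. rewrite <- Nat2Z.inj_mod. lia.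
Qed.

Lemma nat_mod2_iff (l m : nat) : (1 <= m)%nat ->
  ((l mod (2 * m) = m)%nat <-> exists j, Z.of_nat l = (Z.of_nat m * (2 * j + 1))%Z).
Proof.
  intro h. split.
  - intro H. exists (Z.of_nat (l / (2 * m))).
    pose proof (Nat.div_mod_eq l (2 * m)). rewrite H in H0. lia.
  - intros [j Hj]. apply Nat2Z.inj. rewrite Nat2Z.inj_mod, Hj.
    symmetry. apply Z.mod_unique with j; lia.
Qed.

Section Main.
Variables (m1 m2 : nat) (alpha : R) (h1 : (1 <= m1)%nat) (h2 : (1 <= m2)%nat)
  (hg : Z.gcd (Z.of_nat m1) (Z.of_nat m2) = 1%Z).

Let rho := rhodonea m1 m2 alpha.
Let Z1 := Z.of_nat m1.
Let Z2 := Z.of_nat m2.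

Lemma zf x : cos (INR m2 * x) = 0 -> exists j, x = tz m1 m2 (Z.of_nat m1 * (2 * j + 1)).
Proof. apply (zero_iff m1 m2 h1 h2). Qed.
Lemma zb x j : x = tz m1 m2 (Z.of_nat m1 * (2 * j + 1)) -> cos (INR m2 * x) = 0.
Proof. intro; apply (zero_iff m1 m2 h1 h2); eauto. Qed.
Lemma trf L : 0 <= tz m1 m2 L < 2 * PI -> (0 <= L < 4 * Z.of_nat m1 * Z.of_nat m2)%Z.
Proof. apply (tz_range m1 m2 h1 h2). Qed.
Lemma trb L : (0 <= L < 4 * Z.of_nat m1 * Z.of_nat m2)%Z -> 0 <= tz m1 m2 L < 2 * PI.
Proof. apply (tz_range m1 m2 h1 h2). Qed.

Lemma S_char t s : cos (INR m2 * t) <> 0 ->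
  (S_set rho t s <-> 0 <= s < 2 * PI /\ (D1 m1 m2 s t \/ D2 m1 m2 s t)).
Proof.
  intro Hc. unfold S_set, rho. split.
  - intros [A B]. split; auto. apply (rho_fwd _ _ alpha); auto.
  - intros [A [B|B]]; split; auto. apply rho_D1; auto. apply rho_D2; auto.
Qed.

Lemma mk_node t L : (0 <= L < 4 * Z1 * Z2)%Z -> t = tz m1 m2 L ->
  exists l, (l < 4 * m1 * m2)%nat /\ Z.of_nat l = L /\ t = t_node m1 m2 l.
Proof.
  intros HL Ht. exists (Z.to_nat L). unfold Z1, Z2 in *. split; [lia|]. split; [lia|].
  rewrite t_node_tz, Z2Nat.id by lia. auto.
Qed.

Lemma case_i t l : (l < 4 * m1 * m2)%nat -> (l mod (2 * m1) = m1)%nat -> t = t_node m1 m2 l ->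
  card_eq (S_set rho t) (2 * m2).
Proof.
  intros Hl Hm Ht. apply nat_mod2_iff in Hm; auto. destruct Hm as [j Hj].
  rewrite t_node_tz, Hj in Ht.
  assert (Hz : cos (INR m2 * t) = 0) by (eapply zb; eauto).
  set (f := fun j : nat => tz m1 m2 (Z.of_nat m1 * (2 * Z.of_nat j + 1))).
  replace (2 * m2)%nat with (length (map f (seq 0 (2 * m2)))) by (rewrite length_map, length_seq; auto).
  apply card_list.
  - apply Injective_map_NoDup; [|apply seq_NoDup].
    intros a b E. unfold f in E. apply tz_inj in E; auto. nia.
  - intro s. unfold S_set, rho. rewrite (rho_zero _ _ _ _ _ Hz).
    rewrite in_map_iff. split.
    + intros [a [Ea Ia]]. apply in_seq in Ia. subst s. unfold f. split.
      * apply trb. nia.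
      * eapply zb; eauto.
    + intros [R1 R2]. apply zf in R2. destruct R2 as [b Hb].
      rewrite Hb in R1. apply trf in R1.
      exists (Z.to_nat b). split.
      * unfold f. rewrite Z2Nat.id by nia. auto.
      * apply in_seq. nia.
Qed.

Lemma nz_of t : 0 <= t < 2 * PI ->
  ~ (exists l : nat, (l < 4 * m1 * m2)%nat /\ (l mod (2 * m1) = m1)%nat /\ t = t_node m1 m2 l) ->
  cos (INR m2 * t) <> 0.
Proof.
  intros Ht Hn Hz. apply Hn. apply zf in Hz. destruct Hz as [j Hj].
  pose proof Hj as Hr. rewrite Hj in Ht. apply trf in Ht.
  destruct (mk_node _ _ Ht Hr) as [l [A [B C]]]. exists l. split; auto. split; auto.
  apply nat_mod2_iff; eauto.
Qed.

Lemma D1_odd s t : Z.Odd (Z1 + Z2) -> 0 <= s < 2 * PI -> 0 <= t < 2 * PI -> D1 m1 m2 s t -> s = t.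
Proof.
  intros Ho Hs Ht [c [E Hc]]. apply (pi_class_even t s c); auto.
  apply even_mul_odd with (Z1 + Z2)%Z; auto.
Qed.

Lemma D1_even s t : 0 <= s < 2 * PI -> 0 <= t < 2 * PI -> D1 m1 m2 s t -> s = t \/ s = oth t.
Proof. intros Hs Ht [c [E Hc]]. apply (pi_class2 t s c); auto. Qed.

Lemma D1_oth t : Z.Even (Z1 + Z2) -> 0 <= t < 2 * PI -> D1 m1 m2 (oth t) t.
Proof.
  intros [w Hw] Ht. destruct (oth_spec t Ht) as [_ [_ [e [He E]]]].
  exists e. split; auto. exists (e * w)%Z. unfold Z1, Z2 in Hw. rewrite Hw. ring.
Qed.

Lemma D1_refl t : D1 m1 m2 t t.
Proof. exists 0%Z. split. simpl; ring. exists 0%Z. ring. Qed.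

Lemma D2_div s t L : D2 m1 m2 s t -> t = tz m1 m2 L -> (Z1 | L)%Z ->
  exists z w, s = t + IZR (- z) * PI /\ L = (Z1 * w)%Z /\ Z.Even (w + z * (Z1 - Z2)).
Proof.
  intros [q [k [[a Ha] [Ht Hs]]]] HL Hd. rewrite Ht in HL. apply tz_inj in HL; auto.
  assert (Dk : (Z1 | k)%Z).
  { apply Z.gauss with Z2; auto. unfold Z1, Z2 in *. destruct Hd as [d Hd].
    exists (d - q)%Z. lia. }
  destruct Dk as [z Hz]. exists z, (q + Z2 * z)%Z. unfold Z1, Z2 in *. split; [|split].
  - rewrite Hs, Ht, <- (tz_shift m1 m2 h1 h2). f_equal. subst k. ring.
  - subst. ring.
  - exists a. subst k. lia.
Qed.

Lemma D2_make q0 k0 n : Z.Even (q0 + k0 + n * (Z2 - Z1)) ->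
  D2 m1 m2 (tz m1 m2 (Z1 * q0 - Z2 * k0 + 2 * Z1 * Z2 * n)) (tz m1 m2 (Z1 * q0 + Z2 * k0)).
Proof.
  intros [a Ha]. exists (q0 + Z2 * n)%Z, (k0 - Z1 * n)%Z. unfold Z1, Z2 in *. split; [|split].
  - exists a. rewrite <- Ha. ring.
  - f_equal. ring.
  - f_equal. ring.
Qed.

End Main.

Section Main2.
Variables (m1 m2 : nat) (alpha : R) (h1 : (1 <= m1)%nat) (h2 : (1 <= m2)%nat)
  (hg : Z.gcd (Z.of_nat m1) (Z.of_nat m2) = 1%Z).



Lemma D2_same s t c L : D2 m1 m2 s t -> s = t + IZR c * PI -> t = tz m1 m2 L ->
  (Z.of_nat m1 | L)%Z.
Proof.
  intros [q [k [_ [Ht Hs]]]] E HL. rewrite Ht in HL. apply (tz_inj m1 m2 h1 h2) in HL.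
  rewrite Hs, Ht, <- (tz_shift m1 m2 h1 h2) in E. apply (tz_inj m1 m2 h1 h2) in E.
  assert (Hk : (k = - Z.of_nat m1 * c)%Z).
  { apply (Z.mul_reg_l _ _ (2 * Z.of_nat m2)); [lia|]. nia. }
  exists (q - Z.of_nat m2 * c)%Z. subst. ring.
Qed.

Lemma odd_ii t l : Z.Odd (Z.of_nat m1 + Z.of_nat m2) -> (l < 4 * m1 * m2)%nat -> (l mod m1 <> 0)%nat ->
  t = t_node m1 m2 l -> card_eq (S_set (rhodonea m1 m2 alpha) t) 2.
Proof.
  intros Ho Hl Hm Ht. rewrite t_node_tz in Ht.
  assert (Hnd : ~ (Z.of_nat m1 | Z.of_nat l)%Z) by (rewrite <- nat_mod_div; auto).
  assert (Hc : cos (INR m2 * t) <> 0).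
  { intro Hz. apply (zf m1 m2 h1 h2) in Hz. destruct Hz as [j Hj]. rewrite Ht in Hj.
    apply (tz_inj m1 m2 h1 h2) in Hj. apply Hnd. exists (2 * j + 1)%Z. rewrite Hj. ring. }
  destruct (bezout_L m1 m2 hg (Z.of_nat l)) as [q0 [k0 Hqk]].
  destruct Ho as [d0 Hd0].
  assert (Hd : (Z.of_nat m2 - Z.of_nat m1 = 2 * (d0 - Z.of_nat m1) + 1)%Z) by lia.
  set (e := ((q0 + k0) mod 2)%Z).
  assert (He : (q0 + k0 = 2 * ((q0 + k0) / 2) + e)%Z) by (apply Z.div_mod; lia).
  set (D := ((q0 + k0) / 2)%Z) in *.
  destruct (shift_into (Z.of_nat m1 * q0 - Z.of_nat m2 * k0 + 2 * Z.of_nat m1 * Z.of_nat m2 * e)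
     (4 * Z.of_nat m1 * Z.of_nat m2) ltac:(lia)) as [n' Hn'].
  set (n := (e + 2 * n')%Z).
  set (sx := tz m1 m2 (Z.of_nat m1 * q0 - Z.of_nat m2 * k0 + 2 * Z.of_nat m1 * Z.of_nat m2 * n)).
  assert (HD : D2 m1 m2 sx t).
  { rewrite Ht, <- Hqk. apply D2_make.
    exists (D + e + e * (d0 - Z.of_nat m1) + n' * (2 * (d0 - Z.of_nat m1) + 1))%Z.
    unfold n. rewrite Hd. rewrite He at 1. ring. }
  assert (Hsr : 0 <= sx < 2 * PI).
  { apply trb; auto. unfold n. nia. }
  assert (Htr : 0 <= t < 2 * PI).
  { rewrite Ht. apply trb; auto. lia. }
  assert (Hne : sx <> t).
  { intro E. apply Hnd. apply (D2_same sx t 0 (Z.of_nat l)); auto. simpl. lra. }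
  replace 2%nat with (length [t; sx]) by reflexivity.
  apply card_list.
  - constructor; [simpl; intros [E|[]]; auto| constructor; [intros []|constructor]].
  - intro s. rewrite (S_char m1 m2 alpha h1 h2 hg t s Hc). simpl. split.
    + intros [E|[E|[]]]; subst s; split; auto. left; apply D1_refl.
    + intros [Hs [H|H]].
      * left. symmetry. apply (D1_odd m1 m2) ; auto. exists d0; auto.
      * right; [left]. destruct (D2_uniq m1 m2 h1 h2 hg s sx t H HD) as [k [Ek Hk]].
        symmetry. apply (pi_class_even sx s k); auto.
        apply even_mul_odd with (Z.of_nat m2 - Z.of_nat m1)%Z; auto.
        exists (d0 - Z.of_nat m1)%Z. auto.
Qed.


Lemma odd_iii t : Z.Odd (Z.of_nat m1 + Z.of_nat m2) -> 0 <= t < 2 * PI ->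
  ~ (exists l : nat, (l < 4 * m1 * m2)%nat /\ (l mod (2 * m1) = m1)%nat /\ t = t_node m1 m2 l) ->
  ~ (exists l : nat, (l < 4 * m1 * m2)%nat /\ (l mod m1 <> 0)%nat /\ t = t_node m1 m2 l) ->
  card_eq (S_set (rhodonea m1 m2 alpha) t) 1.
Proof.
  intros Ho Htr Hn1 Hn2.
  assert (Hc := nz_of m1 m2 h1 h2 t Htr Hn1).
  replace 1%nat with (length [t]) by reflexivity.
  apply card_list.
  - constructor; [intros []|constructor].
  - intro s. rewrite (S_char m1 m2 alpha h1 h2 hg t s Hc). simpl. split.
    + intros [E|[]]; subst s; split; auto. left; apply D1_refl.
    + intros [Hs [H|H]].
      * left. symmetry. apply (D1_odd m1 m2) ; auto.
      * left. symmetry. pose proof H as H'.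
        destruct H' as [q [k [_ [Ht _]]]].
        pose proof Ht as Ht'. pose proof Htr as Htr0. rewrite Ht in Htr. apply (trf m1 m2 h1 h2) in Htr.
        destruct (mk_node m1 m2 h1 h2 t _ Htr Ht') as [l [Hl [El Etl]]].
        assert (Hm : (l mod m1 = 0)%nat).
        { destruct (Nat.eq_dec (l mod m1) 0); auto. exfalso. apply Hn2. eauto. }
        apply nat_mod_div in Hm; auto. rewrite El in Hm.
        destruct (D2_div m1 m2 h1 h2 hg s t _ H Ht' Hm) as [z [w [Es [Ew Hev]]]].
        assert (Hw : Z.Even w).
        { destruct (Z.Even_or_Odd w) as [|[j Hj]]; auto. exfalso. apply Hn1.
          exists l. split; auto. split; auto. apply nat_mod2_iff; auto. exists j. rewrite El, Ew, Hj. ring. }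
        apply (pi_class_even t s (-z)); auto.
        destruct Ho as [d0 Hd0]. destruct Hw as [a Ha]. destruct Hev as [b Hb].
        assert (Hz : Z.Even z).
        { apply even_mul_odd with (Z.of_nat m1 - Z.of_nat m2)%Z.
          - exists (b - a)%Z. lia.
          - exists (Z.of_nat m1 - d0 - 1)%Z. lia. }
        destruct Hz as [u Hu]. exists (- u)%Z. lia.
Qed.

Lemma odd12 : Z.Even (Z.of_nat m1 + Z.of_nat m2) -> Z.Odd (Z.of_nat m1) /\ Z.Odd (Z.of_nat m2).
Proof.
  intro He. destruct (Z.Even_or_Odd (Z.of_nat m1)) as [[a Ha]|H1].
  - exfalso. destruct He as [b Hb].
    assert (D : (2 | Z.gcd (Z.of_nat m1) (Z.of_nat m2))%Z).
    { apply Z.gcd_greatest; [exists a | exists (b - a)%Z]; lia. }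
    rewrite hg in D. destruct D as [c Hc]. lia.
  - split; auto. destruct H1 as [a Ha]. destruct He as [b Hb]. exists (b - a - 1)%Z. lia.
Qed.

Lemma even_ii t l : Z.Even (Z.of_nat m1 + Z.of_nat m2) -> (l < 2 * m1 * m2)%nat -> (l mod m1 <> 0)%nat ->
  t = t_node m1 m2 (2 * l) -> card_eq (S_set (rhodonea m1 m2 alpha) t) 4.
Proof.
  intros Hev Hl Hm Ht. rewrite t_node_tz in Ht.
  destruct (odd12 Hev) as [[a1 Ha1] [b1 Hb1]].
  assert (Hnd : ~ (Z.of_nat m1 | Z.of_nat l)%Z) by (rewrite <- nat_mod_div; auto).
  assert (Hnd2 : ~ (Z.of_nat m1 | Z.of_nat (2 * l))%Z).
  { intros [c Hc]. apply Hnd.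
    assert (Ec : Z.Even c).
    { apply even_mul_odd with (Z.of_nat m1). exists (Z.of_nat l). lia. exists a1; auto. }
    destruct Ec as [c' Hc']. exists c'. lia. }
  assert (Hc : cos (INR m2 * t) <> 0).
  { intro Hz. apply (zf m1 m2 h1 h2) in Hz. destruct Hz as [j Hj]. rewrite Ht in Hj.
    apply (tz_inj m1 m2 h1 h2) in Hj. rewrite Ha1 in Hj. lia. }
  destruct (bezout_L m1 m2 hg (Z.of_nat (2 * l))) as [q0 [k0 Hqk]].
  destruct (shift_into (Z.of_nat m1 * q0 - Z.of_nat m2 * k0)
     (4 * Z.of_nat m1 * Z.of_nat m2) ltac:(lia)) as [n Hn].
  set (sx := tz m1 m2 (Z.of_nat m1 * q0 - Z.of_nat m2 * k0 + 2 * Z.of_nat m1 * Z.of_nat m2 * (2 * n))).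
  assert (HD : D2 m1 m2 sx t).
  { rewrite Ht, <- Hqk. apply D2_make.
    exists (Z.of_nat l - a1 * q0 - b1 * k0 + 2 * n * (b1 - a1))%Z.
    assert (E2 : (q0 + k0 = 2 * Z.of_nat l - 2 * a1 * q0 - 2 * b1 * k0)%Z).
    { rewrite Ha1, Hb1 in Hqk. lia. }
    rewrite E2, Ha1, Hb1. ring. }
  assert (Hsr : 0 <= sx < 2 * PI).
  { apply trb; auto. nia. }
  assert (Htr : 0 <= t < 2 * PI).
  { rewrite Ht. apply trb; auto. lia. }
  assert (Hns : forall c, sx <> t + IZR c * PI).
  { intros c E. apply Hnd2. apply (D2_same sx t c); auto. }
  destruct (oth_spec t Htr) as [Or1 [On1 [e1 [He1 Oe1]]]].
  destruct (oth_spec sx Hsr) as [Or2 [On2 [e2 [He2 Oe2]]]].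
  assert (HD' : D2 m1 m2 (oth sx) t).
  { rewrite Oe2. apply D2_shift; auto. exists (e2 * (b1 - a1))%Z. rewrite Ha1, Hb1. ring. }
  replace 4%nat with (length [t; oth t; sx; oth sx]) by reflexivity.
  apply card_list.
  - assert (N1 : t <> sx) by (intro E; apply (Hns 0%Z); simpl; lra).
    assert (N2 : t <> oth sx).
    { intro E. apply (Hns (- e2)%Z). rewrite opp_IZR. lra. }
    assert (N3 : oth t <> sx).
    { intro E. apply (Hns e1). lra. }
    assert (N4 : oth t <> oth sx).
    { intro E. apply (Hns (e1 - e2)%Z). rewrite minus_IZR. lra. }
    repeat constructor; simpl; intuition.
  - intro s. rewrite (S_char m1 m2 alpha h1 h2 hg t s Hc). simpl. split.
    + intros [E|[E|[E|[E|[]]]]]; subst s; split; auto.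
      * left; apply D1_refl.
      * left; apply D1_oth; auto.
    + intros [Hs [H|H]].
      * destruct (D1_even m1 m2 s t Hs Htr H); auto.
      * destruct (D2_uniq m1 m2 h1 h2 hg s sx t H HD) as [k [Ek Hk]].
        destruct (pi_class2 sx s k Hsr Hs Ek); auto.
Qed.

Lemma even_iii t : Z.Even (Z.of_nat m1 + Z.of_nat m2) -> 0 <= t < 2 * PI ->
  ~ (exists l : nat, (l < 4 * m1 * m2)%nat /\ (l mod (2 * m1) = m1)%nat /\ t = t_node m1 m2 l) ->
  ~ (exists l : nat, (l < 2 * m1 * m2)%nat /\ (l mod m1 <> 0)%nat /\ t = t_node m1 m2 (2 * l)) ->
  card_eq (S_set (rhodonea m1 m2 alpha) t) 2.
Proof.
  intros Hev Htr Hn1 Hn2.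
  destruct (odd12 Hev) as [[a1 Ha1] [b1 Hb1]].
  assert (Hc := nz_of m1 m2 h1 h2 t Htr Hn1).
  destruct (oth_spec t Htr) as [Or1 [On1 [e1 [He1 Oe1]]]].
  replace 2%nat with (length [t; oth t]) by reflexivity.
  apply card_list.
  - repeat constructor; simpl; intuition.
  - intro s. rewrite (S_char m1 m2 alpha h1 h2 hg t s Hc). simpl. split.
    + intros [E|[E|[]]]; subst s; split; auto.
      * left; apply D1_refl.
      * left; apply D1_oth; auto.
    + intros [Hs [H|H]].
      * destruct (D1_even m1 m2 s t Hs Htr H); auto.
      * pose proof H as H'. destruct H' as [q [k [[a Ha] [Ht _]]]].
        pose proof Ht as Ht'. pose proof Htr as Htr0. rewrite Ht in Htr. apply (trf m1 m2 h1 h2) in Htr.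
        set (L := (Z.of_nat m1 * q + Z.of_nat m2 * k)%Z) in *.
        assert (EL : (L = 2 * (a1 * q + b1 * k + a))%Z).
        { unfold L. rewrite Ha1, Hb1. lia. }
        set (l' := (a1 * q + b1 * k + a)%Z) in *.
        assert (Hm : (Z.to_nat l' mod m1 = 0)%nat).
        { destruct (Nat.eq_dec (Z.to_nat l' mod m1) 0); auto. exfalso. apply Hn2.
          exists (Z.to_nat l'). split; [lia|]. split; auto.
          rewrite t_node_tz, Ht'. f_equal. lia. }
        apply nat_mod_div in Hm; auto. rewrite Z2Nat.id in Hm by lia.
        assert (Hm2 : (Z.of_nat m1 | L)%Z).
        { rewrite EL. apply Z.divide_mul_r. auto. }
        destruct (D2_div m1 m2 h1 h2 hg s t _ H Ht' Hm2) as [z [w [Es _]]].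
        destruct (pi_class2 t s (-z) Htr0 Hs Es); auto.
Qed.

End Main2.

Section Per.
Variables (m1 m2 : nat) (alpha : R) (h1 : (1 <= m1)%nat) (h2 : (1 <= m2)%nat)
  (hg : Z.gcd (Z.of_nat m1) (Z.of_nat m2) = 1%Z).

Lemma t0_not L : PI / (4 * INR m1 * INR m2) <> tz m1 m2 L.
Proof.
  intro E. pose proof (tz_eq m1 m2 L h1 h2) as T. rewrite <- E in T.
  pose proof (posINR _ h1). pose proof (posINR _ h2). pose proof PI_RGT_0.
  assert (IZR (2 * L) = IZR 1).
  { rewrite mult_IZR. apply (Rmult_eq_reg_r PI); [|lra]. rewrite Rmult_assoc, <- T. field. lra. }
  apply eq_IZR in H2. lia.
Qed.

Lemma period_lb p : 0 < p -> is_period (rhodonea m1 m2 alpha) p ->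
  exists c, (1 <= c)%Z /\ p = IZR c * PI /\ Z.Even (c * (Z.of_nat m1 + Z.of_nat m2)).
Proof.
  intros Hp Hper. set (t0 := PI / (4 * INR m1 * INR m2)).
  assert (Hc : cos (INR m2 * t0) <> 0).
  { intro Hz. apply (zf m1 m2 h1 h2) in Hz. destruct Hz as [j Hj]. eapply t0_not; eauto. }
  destruct (rho_fwd m1 m2 alpha (t0 + p) t0 h1 h2 hg (Hper t0) Hc) as [[c [E Hc2]]|[q [k [_ [Ht _]]]]].
  - exists c. pose proof PI_RGT_0.
    assert (0 < IZR c) by (apply (Rmult_lt_reg_r PI); lra).
    apply lt_IZR in H0. split; [lia|]. split; auto. lra.
  - exfalso. eapply t0_not; eauto.
Qed.

Lemma is_period_c c : Z.Even (c * (Z.of_nat m1 + Z.of_nat m2)) -> is_period (rhodonea m1 m2 alpha) (IZR c * PI).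
Proof. intros He t. apply rho_D1. exists c. split; auto. Qed.

End Per.

Theorem proposition2p1 (m1 m2 : nat) (alpha : R)
  (hm1 : (1 <= m1)%nat) (hm2 : (1 <= m2)%nat) (hcop : Nat.gcd m1 m2 = 1%nat) :
  let rho := rhodonea m1 m2 alpha in
  (Nat.Odd (m1 + m2) ->
     minimal_period rho (2 * PI) /\
     (forall t, 0 <= t < 2 * PI ->
        ((exists l : nat, (l < 4 * m1 * m2)%nat /\ (l mod (2 * m1) = m1)%nat
                          /\ t = t_node m1 m2 l) ->
           card_eq (S_set rho t) (2 * m2)) /\
        ((exists l : nat, (l < 4 * m1 * m2)%nat /\ (l mod m1 <> 0)%nat
                          /\ t = t_node m1 m2 l) ->
           card_eq (S_set rho t) 2) /\
        (~ (exists l : nat, (l < 4 * m1 * m2)%nat /\ (l mod (2 * m1) = m1)%nat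
                            /\ t = t_node m1 m2 l) ->
         ~ (exists l : nat, (l < 4 * m1 * m2)%nat /\ (l mod m1 <> 0)%nat
                            /\ t = t_node m1 m2 l) ->
           card_eq (S_set rho t) 1))) /\
  (Nat.Even (m1 + m2) ->
     minimal_period rho PI /\
     (forall t, 0 <= t < 2 * PI ->
        ((exists l : nat, (l < 4 * m1 * m2)%nat /\ (l mod (2 * m1) = m1)%nat
                          /\ t = t_node m1 m2 l) ->
           card_eq (S_set rho t) (2 * m2)) /\
        ((exists l : nat, (l < 2 * m1 * m2)%nat /\ (l mod m1 <> 0)%nat
                          /\ t = t_node m1 m2 (2 * l)) ->
           card_eq (S_set rho t) 4) /\
        (~ (exists l : nat, (l < 4 * m1 * m2)%nat /\ (l mod (2 * m1) = m1)%nat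
                            /\ t = t_node m1 m2 l) ->
         ~ (exists l : nat, (l < 2 * m1 * m2)%nat /\ (l mod m1 <> 0)%nat
                            /\ t = t_node m1 m2 (2 * l)) ->
           card_eq (S_set rho t) 2))).
Proof.
  intro rho. unfold rho.
  assert (hg : Z.gcd (Z.of_nat m1) (Z.of_nat m2) = 1%Z).
  { destruct (Nat.gcd_bezout_pos m1 m2 ltac:(lia)) as [a [b e]]. rewrite hcop in e.
    apply Z.bezout_1_gcd. exists (Z.of_nat a), (- Z.of_nat b)%Z. lia. }
  pose proof PI_RGT_0.
  split.
  - intros [w Hw]. assert (Ho : Z.Odd (Z.of_nat m1 + Z.of_nat m2)) by (exists (Z.of_nat w); lia).
    split; [split; [lra|split]|].
    + replace (2 * PI) with (IZR 2 * PI) by (simpl; ring). apply is_period_c.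
      exists (Z.of_nat m1 + Z.of_nat m2)%Z. ring.
    + intros p Hp Hper. destruct (period_lb m1 m2 alpha hm1 hm2 hg p Hp Hper) as [c [Hc [Ep Ev]]].
      assert (Ec : Z.Even c) by (apply even_mul_odd with (Z.of_nat m1 + Z.of_nat m2)%Z; auto).
      destruct Ec as [u Hu]. assert (2 <= c)%Z by lia. apply IZR_le in H0.
      rewrite Ep. simpl in H0. nra.
    + intros t Ht. split; [|split].
      * intros [l [A [B C]]]. eapply case_i; eauto.
      * intros [l [A [B C]]]. eapply odd_ii; eauto.
      * intros N1 N2. eapply odd_iii; eauto.
  - intros [w Hw]. assert (He : Z.Even (Z.of_nat m1 + Z.of_nat m2)) by (exists (Z.of_nat w); lia).
    split; [split; [lra|split]|].
    + intro t. replace (t + PI) with (t + IZR 1 * PI) by (simpl; ring).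
      apply (is_period_c m1 m2 alpha 1%Z). rewrite Z.mul_1_l. auto.
    + intros p Hp Hper. destruct (period_lb m1 m2 alpha hm1 hm2 hg p Hp Hper) as [c [Hc [Ep Ev]]].
      apply IZR_le in Hc. rewrite Ep. simpl in Hc. nra.
    + intros t Ht. split; [|split].
      * intros [l [A [B C]]]. eapply case_i; eauto.
      * intros [l [A [B C]]]. eapply even_ii; eauto.
      * intros N1 N2. eapply even_iii; eauto.
Qed.
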